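(* Let $I$ be a finite category with a degree function $|\cdot|:\mathrm{Ob}(I)\to\{0,1\}$ such that $|i|<|j|$ for every non-identity morphism $u:i\to j$, and let $\mathcal{C}:I\to\mathsf{Cat}$ be a functor such that each $\mathcal{C}_i=\mathcal{C}(i)$ is a P-category $(\mathcal{C}_i,P,\mathcal{F}_i,\mathcal{W}_i)$ and each $u_*=\mathcal{C}(u):\mathcal{C}_i\to\mathcal{C}_j$ preserves path objects, fibrations, weak equivalences and fibre products. Then the diagram category $\Gamma\mathcal{C}$ is a P-category with path objects, fibrations, weak equivalences and fibre products defined level-wise.
   Context: $\Gamma\mathcal{C}$: objects are families $A_i\in\mathcal{C}_i$ ($i\in I$) with comparison morphisms $\varphi_u:u_*(A_i)\to A_j$ for $u:i\to j$; morphisms $f:A\to B$ are families $f_i:A_i\to B_i$ with $f_j\varphi_u=\varphi_uu_*(f_i)$. Level-wise path: $P(A)=(P(A_i),P(\varphi_u))$ with level-wise $\iota$, $\delta^k$ (and level-wise symmetry, coproduct, interchange, folding map). P-category: a category with finite products and final object $e$, a functorial path $P$ ($\iota:1\to P$, $\delta^0,\delta^1:P\to1$, $\delta^k\iota=1$) equipped with natural transformations $\tau:P\to P$, $c:P\to P^2$, $\mu:P^2\to P^2$, $\nabla:P^2\to P$ with $\tau\tau=1,\tau\iota=\iota,\delta^k\tau=\delta^{1-k}$; $c_{P(A)}c_A=P(c_A)c_A$, $\delta^1_{P(A)}c_A=P(\delta^1_A)c_A=1$, $c_A\iota_A=\iota_{P(A)}\iota_A$, $\delta^0_{P(A)}c_A=P(\delta^0_A)c_A=\iota_A\delta^0_A$;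 $\mu$ invertible, $\delta^k_{P(A)}\mu_A=P(\delta^k_A)$, $P(\delta^k_A)\mu_A=\delta^k_{P(A)}$; $\delta^k\nabla=\delta^k\delta^k_P$, $\nabla\iota_P=1$; and classes $\mathcal{F}$ (fibrations), $\mathcal{W}$ (weak equivalences) with: (P$_1$) both contain isomorphisms, closed under composition, $\mathcal{W}$ 2-out-of-3, $A\to e$ fibrations; (P$_2$) $\iota_A\in\mathcal{W}$, $(\delta^0,\delta^1):P(A)\to A\times A$ fibration, $\delta^k$ trivial fibrations; (P$_3$) for $u:A\to C$ and a fibration $v:B\to C$, $A\times_CB$ exists, $\pi_1$ is a fibration, trivial if $v$ is, and $\pi_2$ is a weak equivalence if $u$ is; (P$_4$) $P$ preserves fibrations, weak equivalences and fibre products; (P$_5$) for each fibration $v:A\to B$, $((\delta^0_A,\delta^1_A),P(v)):P(A)\to(A\times A)\times_{B\times B}P(B)$ is a fibration. *)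

(* Defs.v *)
From Stdlib Require Import List.
Set Implicit Arguments.
Unset Strict Implicit.

Record Cat := mkCat {
  Ob : Type;
  Hom : Ob -> Ob -> Type;
  idm : forall A, Hom A A;
  comp : forall A B C, Hom B C -> Hom A B -> Hom A C }.
Arguments Hom {c} A B.
Arguments idm {c} A.
Arguments comp {c A B C} g f.
Notation "g ∘ f" := (comp g f) (at level 40, left associativity).

Record CatLaws (C : Cat) : Prop := {
  comp_id_l : forall (A B : Ob C) (f : Hom A B), idm B ∘ f = f;
  comp_id_r : forall (A B : Ob C) (f : Hom A B), f ∘ idm A = f;
  comp_assoc : forall (A B X Y : Ob C) (h : Hom X Y) (g : Hom B X) (f : Hom A B),
      h ∘ (g ∘ f) = (h ∘ g) ∘ f }.

Definition isIso {C : Cat} {A B : Ob C} (f : Hom A B) : Prop :=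
  exists g : Hom B A, g ∘ f = idm A /\ f ∘ g = idm B.

Definition castH {C : Cat} {A B : Ob C} (e : A = B) : Hom A B :=
  match e in _ = B' return Hom A B' with eq_refl => idm A end.

Definition is_id {C : Cat} {i j : Ob C} (u : Hom i j) : Prop :=
  exists e : j = i, eq_rect j (fun k => Hom i k) u i e = idm i.

Definition finite_cat (C : Cat) : Prop :=
  (exists lo : list (Ob C), forall i, In i lo) /\
  (forall i j : Ob C, exists lh : list (Hom i j), forall u, In u lh).

Record Functor (C D : Cat) := mkFunctor {
  fobj : Ob C -> Ob D;
  fmap : forall A B, Hom A B -> Hom (fobj A) (fobj B) }.
Arguments fmap {C D} f {A B} _.

Record FunctorLaws (C D : Cat) (F : Functor C D) : Prop := {
  fmap_id : forall A, fmap F (idm A) = idm (fobj F A);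
  fmap_comp : forall (A B X : Ob C) (g : Hom B X) (f : Hom A B),
      fmap F (g ∘ f) = fmap F g ∘ fmap F f }.

Definition IdF (C : Cat) : Functor C C := @mkFunctor C C (fun A => A) (fun A B f => f).
Definition CompF (C D E : Cat) (G : Functor D E) (F : Functor C D) : Functor C E :=
  @mkFunctor C E (fun A => fobj G (fobj F A)) (fun A B f => fmap G (fmap F f)).

(* strict equality of functors, expressed through object equalities *)
Definition functor_eq (C D : Cat) (F G : Functor C D) : Prop :=
  exists e : forall A, fobj F A = fobj G A,
    forall A B (f : Hom A B), castH (e B) ∘ fmap F f = fmap G f ∘ castH (e A).

Definition is_Cat_functor (I : Cat) (Cs : Ob I -> Cat)
    (Cm : forall i j : Ob I, Hom i j -> Functor (Cs i) (Cs j)) : Prop :=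
  (forall i j (u : Hom i j), FunctorLaws (Cm i j u)) /\
  (forall i, functor_eq (Cm i i (idm i)) (IdF (Cs i))) /\
  (forall i j k (u : Hom i j) (v : Hom j k),
      functor_eq (Cm i k (v ∘ u)) (CompF (Cm j k v) (Cm i j u))).
Arguments is_Cat_functor : clear implicits.

Definition is_terminal {C : Cat} (e : Ob C) : Prop :=
  forall X : Ob C, exists! h : Hom X e, True.

Definition is_product {C : Cat} (A B X : Ob C) (p1 : Hom X A) (p2 : Hom X B) : Prop :=
  forall Y (f : Hom Y A) (g : Hom Y B), exists! h : Hom Y X, p1 ∘ h = f /\ p2 ∘ h = g.
Arguments is_product {C} A B X p1 p2.

Definition has_finite_products (C : Cat) : Prop :=
  (exists e : Ob C, is_terminal e) /\
  (forall A B : Ob C, exists X (p1 : Hom X A) (p2 : Hom X B), is_product A B X p1 p2).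

Definition is_pullback {C : Cat} {A B Z Q : Ob C} (u : Hom A Z) (v : Hom B Z)
    (q1 : Hom Q A) (q2 : Hom Q B) : Prop :=
  u ∘ q1 = v ∘ q2 /\
  forall X (f : Hom X A) (g : Hom X B), u ∘ f = v ∘ g ->
    exists! h : Hom X Q, q1 ∘ h = f /\ q2 ∘ h = g.

(* data of a P-category; delta false = delta^0, delta true = delta^1 *)
Record PData (C : Cat) := mkPData {
  Pf : Functor C C;
  iota : forall A, Hom A (fobj Pf A);
  delta : bool -> forall A, Hom (fobj Pf A) A;
  tau : forall A, Hom (fobj Pf A) (fobj Pf A);
  cpath : forall A, Hom (fobj Pf A) (fobj Pf (fobj Pf A));
  mu : forall A, Hom (fobj Pf (fobj Pf A)) (fobj Pf (fobj Pf A));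
  nabla : forall A, Hom (fobj Pf (fobj Pf A)) (fobj Pf A);
  Fib : forall A B : Ob C, Hom A B -> Prop;
  Weq : forall A B : Ob C, Hom A B -> Prop }.
Arguments iota {C} p A.
Arguments delta {C} p k A.
Arguments tau {C} p A.
Arguments cpath {C} p A.
Arguments mu {C} p A.
Arguments nabla {C} p A.
Arguments Fib {C} p {A B} _.
Arguments Weq {C} p {A B} _.

Notation PO D A := (fobj (Pf D) A).
Notation Pm D f := (fmap (Pf D) f).

Definition preserves_fib_pullbacks {C C' : Cat} (D : PData C) (F : Functor C C') : Prop :=
  forall (A B Z : Ob C) (u : Hom A Z) (v : Hom B Z), Fib D v ->
  forall Q (q1 : Hom Q A) (q2 : Hom Q B), is_pullback u v q1 q2 ->
    is_pullback (fmap F u) (fmap F v) (fmap F q1) (fmap F q2).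

Record PNatural (C : Cat) (D : PData C) : Prop := {
  P_laws : FunctorLaws (Pf D);
  iota_nat : forall A B (f : Hom A B), iota D B ∘ f = Pm D f ∘ iota D A;
  delta_nat : forall k A B (f : Hom A B), delta D k B ∘ Pm D f = f ∘ delta D k A;
  tau_nat : forall A B (f : Hom A B), tau D B ∘ Pm D f = Pm D f ∘ tau D A;
  cpath_nat : forall A B (f : Hom A B), cpath D B ∘ Pm D f = Pm D (Pm D f) ∘ cpath D A;
  mu_nat : forall A B (f : Hom A B), mu D B ∘ Pm D (Pm D f) = Pm D (Pm D f) ∘ mu D A;
  nabla_nat : forall A B (f : Hom A B), nabla D B ∘ Pm D (Pm D f) = Pm D f ∘ nabla D A }.

Record IsPCat (C : Cat) (D : PData C) : Prop := {
  pc_cat : CatLaws C;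
  pc_products : has_finite_products C;
  pc_nat : PNatural D;
  pc_delta_iota : forall k A, delta D k A ∘ iota D A = idm A;
  pc_tau_tau : forall A, tau D A ∘ tau D A = idm (PO D A);
  pc_tau_iota : forall A, tau D A ∘ iota D A = iota D A;
  pc_delta_tau : forall k A, delta D k A ∘ tau D A = delta D (negb k) A;
  pc_c_coassoc : forall A, cpath D (PO D A) ∘ cpath D A = Pm D (cpath D A) ∘ cpath D A;
  pc_c_delta1_l : forall A, delta D true (PO D A) ∘ cpath D A = idm (PO D A);
  pc_c_delta1_r : forall A, Pm D (delta D true A) ∘ cpath D A = idm (PO D A);
  pc_c_iota : forall A, cpath D A ∘ iota D A = iota D (PO D A) ∘ iota D A;
  pc_c_delta0_l : forall A, delta D false (PO D A) ∘ cpath D A = iota D A ∘ delta D false A;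
  pc_c_delta0_r : forall A, Pm D (delta D false A) ∘ cpath D A = iota D A ∘ delta D false A;
  pc_mu_iso : forall A, isIso (mu D A);
  pc_mu_l : forall k A, delta D k (PO D A) ∘ mu D A = Pm D (delta D k A);
  pc_mu_r : forall k A, Pm D (delta D k A) ∘ mu D A = delta D k (PO D A);
  pc_nabla_delta : forall k A, delta D k A ∘ nabla D A = delta D k A ∘ delta D k (PO D A);
  pc_nabla_iota : forall A, nabla D A ∘ iota D (PO D A) = idm (PO D A);
  pc_fib_iso : forall A B (f : Hom A B), isIso f -> Fib D f;
  pc_weq_iso : forall A B (f : Hom A B), isIso f -> Weq D f;
  pc_fib_comp : forall A B X (g : Hom B X) (f : Hom A B), Fib D f -> Fib D g -> Fib D (g ∘ f);
  pc_weq_comp : forall A B X (g : Hom B X) (f : Hom A B), Weq D f -> Weq D g -> Weq D (g ∘ f);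
  pc_weq_2of3_l : forall A B X (g : Hom B X) (f : Hom A B), Weq D g -> Weq D (g ∘ f) -> Weq D f;
  pc_weq_2of3_r : forall A B X (g : Hom B X) (f : Hom A B), Weq D f -> Weq D (g ∘ f) -> Weq D g;
  pc_fib_terminal : forall e, is_terminal e -> forall A (f : Hom A e), Fib D f;
  pc_weq_iota : forall A, Weq D (iota D A);
  pc_fib_delta01 : forall A X (p1 : Hom X A) (p2 : Hom X A), is_product A A X p1 p2 ->
      forall h : Hom (PO D A) X, p1 ∘ h = delta D false A -> p2 ∘ h = delta D true A ->
      Fib D h;
  pc_delta_trivfib : forall k A, Fib D (delta D k A) /\ Weq D (delta D k A);
  pc_pullback : forall A B Z (u : Hom A Z) (v : Hom B Z), Fib D v ->
      (exists Q (q1 : Hom Q A) (q2 : Hom Q B), is_pullback u v q1 q2) /\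
      (forall Q (q1 : Hom Q A) (q2 : Hom Q B), is_pullback u v q1 q2 ->
         Fib D q1 /\ (Weq D v -> Weq D q1) /\ (Weq D u -> Weq D q2));
  pc_P_fib : forall A B (f : Hom A B), Fib D f -> Fib D (Pm D f);
  pc_P_weq : forall A B (f : Hom A B), Weq D f -> Weq D (Pm D f);
  pc_P_pullback : preserves_fib_pullbacks D (Pf D);
  pc_P5 : forall A B (v : Hom A B), Fib D v ->
      forall AA (a1 a2 : Hom AA A), is_product A A AA a1 a2 ->
      forall BB (b1 b2 : Hom BB B), is_product B B BB b1 b2 ->
      forall w : Hom AA BB, b1 ∘ w = v ∘ a1 -> b2 ∘ w = v ∘ a2 ->
      forall d : Hom (PO D B) BB, b1 ∘ d = delta D false B -> b2 ∘ d = delta D true B ->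
      forall Q (q1 : Hom Q AA) (q2 : Hom Q (PO D B)), is_pullback w d q1 q2 ->
      forall h : Hom (PO D A) AA, a1 ∘ h = delta D false A -> a2 ∘ h = delta D true A ->
      forall k : Hom (PO D A) Q, q1 ∘ k = h -> q2 ∘ k = Pm D v ->
      Fib D k }.

Definition cast2 {C C' : Cat} (D : PData C) (D' : PData C') (F : Functor C C')
    (e : forall A, fobj F (PO D A) = PO D' (fobj F A)) (A : Ob C) :
    Hom (fobj F (PO D (PO D A))) (PO D' (PO D' (fobj F A))) :=
  Pm D' (castH (e A)) ∘ castH (e (PO D A)).

Record preserves_path {C C' : Cat} (D : PData C) (D' : PData C') (F : Functor C C')
    (e : forall A, fobj F (PO D A) = PO D' (fobj F A)) : Prop := {
  pp_P : forall A B (f : Hom A B),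
      castH (e B) ∘ fmap F (Pm D f) = Pm D' (fmap F f) ∘ castH (e A);
  pp_iota : forall A, castH (e A) ∘ fmap F (iota D A) = iota D' (fobj F A);
  pp_delta : forall k A, delta D' k (fobj F A) ∘ castH (e A) = fmap F (delta D k A);
  pp_tau : forall A, castH (e A) ∘ fmap F (tau D A) = tau D' (fobj F A) ∘ castH (e A);
  pp_cpath : forall A, cast2 e A ∘ fmap F (cpath D A) = cpath D' (fobj F A) ∘ castH (e A);
  pp_mu : forall A, cast2 e A ∘ fmap F (mu D A) = mu D' (fobj F A) ∘ cast2 e A;
  pp_nabla : forall A, castH (e A) ∘ fmap F (nabla D A) = nabla D' (fobj F A) ∘ cast2 e A }.
Arguments preserves_path {C C'} D D' F e.

Section Gamma.
Variables (I : Cat) (Cs : Ob I -> Cat)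
  (Cm : forall i j : Ob I, Hom i j -> Functor (Cs i) (Cs j)).
Variable HC : forall i, CatLaws (Cs i).
Variable HF : forall (i j : Ob I) (u : Hom i j), FunctorLaws (Cm u).

Record GOb := mkGOb {
  gob : forall i, Ob (Cs i);
  gphi : forall (i j : Ob I) (u : Hom i j), Hom (fobj (Cm u) (gob i)) (gob j) }.

Definition gcomm (A B : GOb) (f : forall i, Hom (gob A i) (gob B i)) : Prop :=
  forall (i j : Ob I) (u : Hom i j), f j ∘ gphi A u = gphi B u ∘ fmap (Cm u) (f i).

Record GHom (A B : GOb) := mkGHom {
  gmor : forall i, Hom (gob A i) (gob B i);
  gmor_comm : gcomm gmor }.
Arguments gmor {A B} _ i.

Lemma gid_comm (A : GOb) : gcomm (A := A) (B := A) (fun i => idm (gob A i)).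
Proof.
  intros i j u. rewrite (fmap_id (HF u)), (comp_id_l (HC j)), (comp_id_r (HC j)).
  reflexivity.
Qed.

Lemma gcomp_comm (A B X : GOb) (g : GHom B X) (f : GHom A B) :
  gcomm (A := A) (B := X) (fun i => gmor g i ∘ gmor f i).
Proof.
  intros i j u. rewrite (fmap_comp (HF u)).
  rewrite <- (comp_assoc (HC j)), (gmor_comm f), (comp_assoc (HC j)), (gmor_comm g).
  rewrite <- (comp_assoc (HC j)). reflexivity.
Qed.

Definition GammaCat : Cat :=
  @mkCat GOb GHom (fun A => mkGHom (gid_comm A))
    (fun A B X g f => mkGHom (gcomp_comm g f)).

Variable D : forall i, PData (Cs i).
Variable HN : forall i, PNatural (D i).
Variable eP : forall (i j : Ob I) (u : Hom i j) (A : Ob (Cs i)),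
  fobj (Cm u) (PO (D i) A) = PO (D j) (fobj (Cm u) A).
Variable HPP : forall (i j : Ob I) (u : Hom i j), preserves_path (D i) (D j) (Cm u) (eP u).

Definition GP (A : GOb) : GOb :=
  @mkGOb (fun i => PO (D i) (gob A i))
    (fun i j u => Pm (D j) (gphi A u) ∘ castH (eP u (gob A i))).

Ltac ra j := repeat rewrite <- (comp_assoc (HC j)).

Lemma GPmap_comm (A B : GOb) (f : GHom A B) :
  gcomm (A := GP A) (B := GP B) (fun i => Pm (D i) (gmor f i)).
Proof.
  intros i j u; simpl.
  rewrite (comp_assoc (HC j)), <- (fmap_comp (P_laws (HN j))).
  rewrite (gmor_comm f), (fmap_comp (P_laws (HN j))). ra j.
  rewrite (pp_P (HPP u)). reflexivity.
Qed.

Definition GPf : Functor GammaCat GammaCat :=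
  @mkFunctor GammaCat GammaCat GP (fun A B f => mkGHom (GPmap_comm f)).

Lemma Giota_comm (A : GOb) :
  gcomm (A := A) (B := GP A) (fun i => iota (D i) (gob A i)).
Proof.
  intros i j u; simpl. ra j. rewrite (pp_iota (HPP u)).
  rewrite (iota_nat (HN j)). reflexivity.
Qed.

Lemma Gdelta_comm (k : bool) (A : GOb) :
  gcomm (A := GP A) (B := A) (fun i => delta (D i) k (gob A i)).
Proof.
  intros i j u; simpl. rewrite (comp_assoc (HC j)), (delta_nat (HN j)).
  ra j. rewrite (pp_delta (HPP u)). reflexivity.
Qed.

Lemma Gtau_comm (A : GOb) :
  gcomm (A := GP A) (B := GP A) (fun i => tau (D i) (gob A i)).
Proof.
  intros i j u; simpl. rewrite (comp_assoc (HC j)), (tau_nat (HN j)).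
  ra j. rewrite (pp_tau (HPP u)). reflexivity.
Qed.

Lemma GP2_phi (A : GOb) (i j : Ob I) (u : Hom i j) :
  gphi (GP (GP A)) u = Pm (D j) (Pm (D j) (gphi A u)) ∘ cast2 (eP u) (gob A i).
Proof.
  simpl. unfold cast2. rewrite (fmap_comp (P_laws (HN j))). ra j. reflexivity.
Qed.

Lemma Gcpath_comm (A : GOb) :
  gcomm (A := GP A) (B := GP (GP A)) (fun i => cpath (D i) (gob A i)).
Proof.
  intros i j u; cbv beta. rewrite GP2_phi. simpl. ra j. rewrite (pp_cpath (HPP u)). simpl.
  rewrite (comp_assoc (HC j)), (cpath_nat (HN j)). ra j. reflexivity.
Qed.

Lemma Gmu_comm (A : GOb) :
  gcomm (A := GP (GP A)) (B := GP (GP A)) (fun i => mu (D i) (gob A i)).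
Proof.
  intros i j u; cbv beta. rewrite !GP2_phi. simpl. ra j. rewrite (pp_mu (HPP u)).
  rewrite (comp_assoc (HC j)), (mu_nat (HN j)). ra j. reflexivity.
Qed.

Lemma Gnabla_comm (A : GOb) :
  gcomm (A := GP (GP A)) (B := GP A) (fun i => nabla (D i) (gob A i)).
Proof.
  intros i j u; cbv beta. rewrite GP2_phi. simpl. ra j. rewrite (pp_nabla (HPP u)).
  rewrite (comp_assoc (HC j)), (nabla_nat (HN j)). ra j. reflexivity.
Qed.

Definition GammaPData : PData GammaCat :=
  @mkPData GammaCat GPf
    (fun A => mkGHom (Giota_comm A))
    (fun k A => mkGHom (Gdelta_comm k A))
    (fun A => mkGHom (Gtau_comm A))
    (fun A => mkGHom (Gcpath_comm A))
    (fun A => mkGHom (Gmu_comm A))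
    (fun A => mkGHom (Gnabla_comm A))
    (fun A B (f : GHom A B) => forall i, Fib (D i) (gmor f i))
    (fun A B (f : GHom A B) => forall i, Weq (D i) (gmor f i)).

Definition Gamma_levelwise_pullbacks : Prop :=
  forall (A B Z : GOb) (u : GHom A Z) (v : GHom B Z),
    Fib GammaPData (A := B) (B := Z) v ->
    exists (Q : GOb) (q1 : GHom Q A) (q2 : GHom Q B),
      @is_pullback GammaCat A B Z Q u v q1 q2 /\
      forall i, is_pullback (gmor u i) (gmor v i) (gmor q1 i) (gmor q2 i).

End Gamma.

(* Main.v *)
Require Import Defs.
From Stdlib Require Import ClassicalEpsilon FunctionalExtensionality ProofIrrelevance.
Set Implicit Arguments.
Unset Strict Implicit.

Definition pick {X : Type} {P : X -> Prop} (h : exists x, P x) : X :=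
  proj1_sig (constructive_indefinite_description P h).
Lemma pick_spec {X : Type} {P : X -> Prop} (h : exists x, P x) : P (pick h).
Proof. unfold pick; destruct (constructive_indefinite_description P h); assumption. Qed.

Section Gen.
Variable C : Cat.
Variable HC : CatLaws C.

Lemma term_uniq (e : Ob C) (H : is_terminal e) X (f g : Hom X e) : f = g.
Proof. destruct (H X) as [m [_ U]]. rewrite <- (U f I), <- (U g I). reflexivity. Qed.

Lemma term_ex (e : Ob C) (H : is_terminal e) X : exists h : Hom X e, True.
Proof. destruct (H X) as [m [_ U]]; eauto. Qed.

Lemma prod_ex {A B X : Ob C} {p1 : Hom X A} {p2 : Hom X B} (H : is_product A B X p1 p2)
  Y (f : Hom Y A) (g : Hom Y B) : exists h : Hom Y X, p1 ∘ h = f /\ p2 ∘ h = g.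
Proof. destruct (H Y f g) as [h [Hh _]]; eauto. Qed.

Lemma prod_uniq {A B X : Ob C} {p1 : Hom X A} {p2 : Hom X B} (H : is_product A B X p1 p2)
  Y (h h' : Hom Y X) : p1 ∘ h = p1 ∘ h' -> p2 ∘ h = p2 ∘ h' -> h = h'.
Proof.
  intros E1 E2. destruct (H Y (p1 ∘ h) (p2 ∘ h)) as [m [_ U]].
  rewrite <- (U h), <- (U h'); auto.
Qed.

Lemma pb_ex {A B Z Q : Ob C} {u : Hom A Z} {v : Hom B Z} {q1 : Hom Q A} {q2 : Hom Q B}
  (H : is_pullback u v q1 q2) X (f : Hom X A) (g : Hom X B) :
  u ∘ f = v ∘ g -> exists h : Hom X Q, q1 ∘ h = f /\ q2 ∘ h = g.
Proof. intro E. destruct (proj2 H X f g E) as [h [Hh _]]; eauto. Qed.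

Lemma pb_uniq {A B Z Q : Ob C} {u : Hom A Z} {v : Hom B Z} {q1 : Hom Q A} {q2 : Hom Q B}
  (H : is_pullback u v q1 q2) X (h h' : Hom X Q) :
  q1 ∘ h = q1 ∘ h' -> q2 ∘ h = q2 ∘ h' -> h = h'.
Proof.
  intros E1 E2. assert (E : u ∘ (q1 ∘ h) = v ∘ (q2 ∘ h)).
  { rewrite !(comp_assoc HC), (proj1 H); reflexivity. }
  destruct (proj2 H X _ _ E) as [m [_ U]].
  rewrite <- (U h), <- (U h'); auto.
Qed.

Lemma term_transfer (e e' : Ob C) (H : is_terminal e') (a : Hom e e') (b : Hom e' e) :
  b ∘ a = idm e -> is_terminal e.
Proof.
  intros Eba X. destruct (term_ex H X) as [t _]. exists (b ∘ t). split; [exact I|].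
  intros h _. rewrite <- (comp_id_l HC h), <- Eba, <- (comp_assoc HC).
  f_equal. apply (term_uniq H).
Qed.

Lemma prod_transfer (A B X X' : Ob C) (p1 : Hom X A) (p2 : Hom X B)
  (q1 : Hom X' A) (q2 : Hom X' B) (H : is_product A B X' q1 q2)
  (a : Hom X X') (b : Hom X' X) : b ∘ a = idm X -> a ∘ b = idm X' ->
  q1 ∘ a = p1 -> q2 ∘ a = p2 -> is_product A B X p1 p2.
Proof.
  intros Eba Eab E1 E2 Y f g. destruct (prod_ex H f g) as [m [M1 M2]].
  exists (b ∘ m). split.
  - subst p1 p2. split; rewrite <- (comp_assoc HC), (comp_assoc HC a), Eab, (comp_id_l HC); assumption.
  - intros h [H1 H2]. rewrite <- (comp_id_l HC h), <- Eba, <- (comp_assoc HC).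
    f_equal. apply (prod_uniq H); rewrite (comp_assoc HC); subst; congruence.
Qed.

Lemma pb_transfer (A B Z Q Q' : Ob C) (u : Hom A Z) (v : Hom B Z)
  (p1 : Hom Q A) (p2 : Hom Q B) (q1 : Hom Q' A) (q2 : Hom Q' B)
  (H : is_pullback u v q1 q2)
  (a : Hom Q Q') (b : Hom Q' Q) : b ∘ a = idm Q -> a ∘ b = idm Q' ->
  q1 ∘ a = p1 -> q2 ∘ a = p2 -> is_pullback u v p1 p2.
Proof.
  intros Eba Eab E1 E2. split.
  - subst p1 p2. rewrite !(comp_assoc HC), (proj1 H). reflexivity.
  - intros Y f g E. destruct (pb_ex H E) as [m [M1 M2]].
    exists (b ∘ m). split.
    + subst p1 p2. split; rewrite <- (comp_assoc HC), (comp_assoc HC a), Eab, (comp_id_l HC); assumption.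
    + intros h [H1 H2]. rewrite <- (comp_id_l HC h), <- Eba, <- (comp_assoc HC).
      f_equal. apply (pb_uniq H); rewrite (comp_assoc HC); subst; congruence.
Qed.

End Gen.

Unset Implicit Arguments.
Set Strict Implicit.

Record PW (C : Cat) (A B : Ob C) := { pwX : Ob C; pw1 : Hom pwX A; pw2 : Hom pwX B;
  pwP : is_product A B pwX pw1 pw2 }.
Record PBW (C : Cat) (A B Z : Ob C) (u : Hom A Z) (v : Hom B Z) :=
  { pbQ : Ob C; pbq1 : Hom pbQ A; pbq2 : Hom pbQ B; pbP : is_pullback u v pbq1 pbq2 }.

Section G.
Variables (I : Cat) (Cs : Ob I -> Cat) (Cm : forall i j : Ob I, Hom i j -> Functor (Cs i) (Cs j)).
Variable HC : forall i, CatLaws (Cs i).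
Variable HF : forall i j (u : Hom i j), FunctorLaws (Cm i j u).
Variable D : forall i, PData (Cs i).
Variable HN : forall i, PNatural (D i).
Variable eP : forall i j (u : Hom i j) (A : Ob (Cs i)),
  fobj (Cm i j u) (PO (D i) A) = PO (D j) (fobj (Cm i j u) A).
Variable HPP : forall i j (u : Hom i j), preserves_path (D i) (D j) (Cm i j u) (eP i j u).
Variable HD : forall i, IsPCat (D i).

Notation GC := (GammaCat HC HF).
Notation GD := (GammaPData HC HF HN HPP).
Notation GO := (GOb Cm).

Lemma gext (A B : GO) (f g : @Hom GC A B) : (forall i, gmor f i = gmor g i) -> f = g.
Proof.
  destruct f as [f Hf], g as [g Hg]; simpl; intro E.
  assert (f = g) by (apply functional_extensionality_dep; exact E). subst g.
  f_equal. apply proof_irrelevance.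
Qed.

Lemma geq {A B : GO} {f g : @Hom GC A B} i : f = g -> gmor f i = gmor g i.
Proof. intros ->; reflexivity. Qed.

Lemma G_cat : CatLaws GC.
Proof.
  split; intros; apply gext; intro i; simpl;
    [apply comp_id_l | apply comp_id_r | apply comp_assoc]; apply HC.
Qed.

Lemma G_iso_lvl (A B : GO) (f : @Hom GC A B) : isIso f -> forall i, isIso (gmor f i).
Proof.
  intros [g [E1 E2]] i. exists (gmor g i). split.
  - exact (geq i E1). - exact (geq i E2).
Qed.

Lemma inv_comm (A B : GO) (f : @Hom GC A B) (g : forall i, Hom (gob B i) (gob A i)) :
  (forall i, g i ∘ gmor f i = idm _) -> (forall i, gmor f i ∘ g i = idm _) -> gcomm g.
Proof.
  intros E1 E2 i j u.
  rewrite <- (comp_id_r (HC j) (g j ∘ gphi B u)).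
  rewrite <- (fmap_id (HF i j u) (gob B i)), <- (E2 i), (fmap_comp (HF i j u)).
  rewrite (comp_assoc (HC j)), <- (comp_assoc (HC j) (g j) (gphi B u)), <- (gmor_comm f).
  rewrite (comp_assoc (HC j)), (E1 j), (comp_id_l (HC j)). reflexivity.
Qed.

Definition Ti i : Ob (Cs i) := pick (proj1 (pc_products (HD i))).
Lemma Ti_term i : is_terminal (Ti i).
Proof. exact (pick_spec (proj1 (pc_products (HD i)))). Qed.
Definition tmap i (X : Ob (Cs i)) : Hom X (Ti i) := pick (term_ex (Ti_term i) X).
Definition GT : GO := @mkGOb I Cs Cm Ti (fun i j u => tmap j (fobj (Cm i j u) (Ti i))).

Lemma GT_term : @is_terminal GC GT.
Proof.
  intro X.
  assert (Hc : gcomm (A:=X) (B:=GT) (fun i => tmap i (gob X i))).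
  { intros i j u. apply (term_uniq (Ti_term j)). }
  exists (mkGHom Hc). split; [exact Logic.I|]. intros h _. apply gext; intro i.
  apply (term_uniq (Ti_term i)).
Qed.

Lemma G_term_lvl (e : GO) : @is_terminal GC e -> forall i, is_terminal (gob e i).
Proof.
  intros He i. destruct (term_ex He GT) as [b _]. destruct (term_ex GT_term e) as [a _].
  apply (term_transfer (HC i) (Ti_term i) (a:=gmor a i) (b:=gmor b i)).
  exact (geq i (term_uniq He (b ∘ a) (@idm GC e))).
Qed.

Lemma G_lvl_prod (A B X : GO) (p1 : @Hom GC X A) (p2 : @Hom GC X B) :
  (forall i, is_product (gob A i) (gob B i) (gob X i) (gmor p1 i) (gmor p2 i)) ->
  @is_product GC A B X p1 p2.
Proof.
  intros Hl Y f g.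
  pose (m := fun i => pick (prod_ex (Hl i) (gmor f i) (gmor g i))).
  assert (Ms : forall i, gmor p1 i ∘ m i = gmor f i /\ gmor p2 i ∘ m i = gmor g i).
  { intro i. exact (pick_spec (prod_ex (Hl i) (gmor f i) (gmor g i))). }
  assert (Hc : gcomm (A:=Y) (B:=X) m).
  { intros i j w. apply (prod_uniq (Hl j)).
    - rewrite (comp_assoc (HC j)), (proj1 (Ms j)), (gmor_comm f).
      rewrite (comp_assoc (HC j)), (gmor_comm p1), <- (comp_assoc (HC j)),
        <- (fmap_comp (HF i j w)), (proj1 (Ms i)). reflexivity.
    - rewrite (comp_assoc (HC j)), (proj2 (Ms j)), (gmor_comm g).
      rewrite (comp_assoc (HC j)), (gmor_comm p2), <- (comp_assoc (HC j)),
        <- (fmap_comp (HF i j w)), (proj2 (Ms i)). reflexivity. }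
  exists (mkGHom Hc). split.
  - split; apply gext; intro i; simpl; apply Ms.
  - intros h [H1 H2]. apply gext; intro i. simpl. apply (prod_uniq (Hl i)).
    + rewrite (proj1 (Ms i)). symmetry; exact (geq i H1).
    + rewrite (proj2 (Ms i)). symmetry; exact (geq i H2).
Qed.

Lemma G_lvl_pb (A B Z Q : GO) (u : @Hom GC A Z) (v : @Hom GC B Z)
  (q1 : @Hom GC Q A) (q2 : @Hom GC Q B) :
  (forall i, is_pullback (gmor u i) (gmor v i) (gmor q1 i) (gmor q2 i)) ->
  @is_pullback GC A B Z Q u v q1 q2.
Proof.
  intros Hl. split.
  { apply gext; intro i. exact (proj1 (Hl i)). }
  intros Y f g E.
  pose (m := fun i => pick (pb_ex (Hl i) (geq i E))).
  assert (Ms : forall i, gmor q1 i ∘ m i = gmor f i /\ gmor q2 i ∘ m i = gmor g i).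
  { intro i. exact (pick_spec (pb_ex (Hl i) (geq i E))). }
  assert (Hc : gcomm (A:=Y) (B:=Q) m).
  { intros i j w. apply (pb_uniq (HC j) (Hl j)).
    - rewrite (comp_assoc (HC j)), (proj1 (Ms j)), (gmor_comm f).
      rewrite (comp_assoc (HC j)), (gmor_comm q1), <- (comp_assoc (HC j)),
        <- (fmap_comp (HF i j w)), (proj1 (Ms i)). reflexivity.
    - rewrite (comp_assoc (HC j)), (proj2 (Ms j)), (gmor_comm g).
      rewrite (comp_assoc (HC j)), (gmor_comm q2), <- (comp_assoc (HC j)),
        <- (fmap_comp (HF i j w)), (proj2 (Ms i)). reflexivity. }
  exists (mkGHom Hc). split.
  - split; apply gext; intro i; simpl; apply Ms.
  - intros h [H1 H2]. apply gext; intro i. simpl. apply (pb_uniq (HC i) (Hl i)).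
    + rewrite (proj1 (Ms i)). symmetry; exact (geq i H1).
    + rewrite (proj2 (Ms i)). symmetry; exact (geq i H2).
Qed.

Lemma pw_ex i (A B : Ob (Cs i)) : exists w : PW (Cs i) A B, True.
Proof.
  destruct (proj2 (pc_products (HD i)) A B) as [X [p1 [p2 H]]].
  exists (Build_PW _ _ _ X p1 p2 H). exact Logic.I.
Qed.
Definition PWi i (A B : Ob (Cs i)) : PW (Cs i) A B := pick (pw_ex i A B).
Definition prX i A B := pwX _ _ _ (PWi i A B).
Definition pr1 i A B : Hom (prX i A B) A := pw1 _ _ _ (PWi i A B).
Definition pr2 i A B : Hom (prX i A B) B := pw2 _ _ _ (PWi i A B).
Lemma prP i A B : is_product A B (prX i A B) (pr1 i A B) (pr2 i A B).
Proof. exact (pwP _ _ _ (PWi i A B)). Qed.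

Definition GPr (A B : GO) : GO := @mkGOb I Cs Cm (fun i => prX i (gob A i) (gob B i))
  (fun i j w => pick (prod_ex (prP j (gob A j) (gob B j))
     (gphi A w ∘ fmap (Cm i j w) (pr1 i _ _)) (gphi B w ∘ fmap (Cm i j w) (pr2 i _ _)))).

Lemma GPr_c1 (A B : GO) : gcomm (A:=GPr A B) (B:=A) (fun i => pr1 i _ _).
Proof. intros i j w. exact (proj1 (pick_spec (prod_ex (prP j _ _) _ _))). Qed.
Lemma GPr_c2 (A B : GO) : gcomm (A:=GPr A B) (B:=B) (fun i => pr2 i _ _).
Proof. intros i j w. exact (proj2 (pick_spec (prod_ex (prP j _ _) _ _))). Qed.
Definition Gp1 (A B : GO) : @Hom GC (GPr A B) A := mkGHom (GPr_c1 A B).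
Definition Gp2 (A B : GO) : @Hom GC (GPr A B) B := mkGHom (GPr_c2 A B).

Lemma GPr_prod (A B : GO) : @is_product GC A B (GPr A B) (Gp1 A B) (Gp2 A B).
Proof. apply G_lvl_prod; intro i; apply prP. Qed.

Lemma G_prod_lvl (A B X : GO) (p1 : @Hom GC X A) (p2 : @Hom GC X B) :
  @is_product GC A B X p1 p2 ->
  forall i, is_product (gob A i) (gob B i) (gob X i) (gmor p1 i) (gmor p2 i).
Proof.
  intros H i.
  destruct (prod_ex (GPr_prod A B) p1 p2) as [a [Ea1 Ea2]].
  destruct (prod_ex H (Gp1 A B) (Gp2 A B)) as [b [Eb1 Eb2]].
  assert (Eba : b ∘ a = @idm GC X).
  { apply (prod_uniq H); rewrite (comp_assoc G_cat), ?Eb1, ?Eb2, ?Ea1, ?Ea2, ?Eb1, ?Eb2, (comp_id_r G_cat);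
    reflexivity. }
  assert (Eab : a ∘ b = @idm GC (GPr A B)).
  { apply (prod_uniq (GPr_prod A B)); rewrite (comp_assoc G_cat), ?Eb1, ?Eb2, ?Ea1, ?Ea2, ?Eb1, ?Eb2, (comp_id_r G_cat);
    reflexivity. }
  apply (prod_transfer (HC i) (prP i _ _) (a:=gmor a i) (b:=gmor b i));
    [exact (geq i Eba) | exact (geq i Eab) | exact (geq i Ea1) | exact (geq i Ea2)].
Qed.

Lemma pbw_ex i (A B Z : Ob (Cs i)) (u : Hom A Z) (v : Hom B Z) :
  Fib (D i) v -> exists w : PBW (Cs i) A B Z u v, True.
Proof.
  intro Hv. destruct (proj1 (pc_pullback (HD i) u Hv)) as [Q [q1 [q2 H]]].
  exists (Build_PBW _ _ _ _ u v Q q1 q2 H). exact Logic.I.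
Qed.

Section PB.
Variables (A B Z : GO) (u : @Hom GC A Z) (v : @Hom GC B Z).
Variable Hv : forall i, Fib (D i) (gmor v i).
Definition PBi i := pick (pbw_ex i _ _ _ (gmor u i) (gmor v i) (Hv i)).
Definition pbX i := pbQ _ _ _ _ _ _ (PBi i).
Definition pb1 i : Hom (pbX i) (gob A i) := pbq1 _ _ _ _ _ _ (PBi i).
Definition pb2 i : Hom (pbX i) (gob B i) := pbq2 _ _ _ _ _ _ (PBi i).
Lemma pbPi i : is_pullback (gmor u i) (gmor v i) (pb1 i) (pb2 i).
Proof. exact (pbP _ _ _ _ _ _ (PBi i)). Qed.

Lemma GPB_E i j (w : Hom i j) :
  gmor u j ∘ (gphi A w ∘ fmap (Cm i j w) (pb1 i)) = gmor v j ∘ (gphi B w ∘ fmap (Cm i j w) (pb2 i)).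
Proof.
  rewrite !(comp_assoc (HC j)), (gmor_comm u), (gmor_comm v), <- !(comp_assoc (HC j)),
    <- !(fmap_comp (HF i j w)), (proj1 (pbPi i)). reflexivity.
Qed.

Definition GPB : GO := @mkGOb I Cs Cm pbX (fun i j w => pick (pb_ex (pbPi j) (GPB_E i j w))).

Lemma GPB_c1 : gcomm (A:=GPB) (B:=A) pb1.
Proof. intros i j w. exact (proj1 (pick_spec (pb_ex (pbPi j) (GPB_E i j w)))). Qed.
Lemma GPB_c2 : gcomm (A:=GPB) (B:=B) pb2.
Proof. intros i j w. exact (proj2 (pick_spec (pb_ex (pbPi j) (GPB_E i j w)))). Qed.
Definition Gq1 : @Hom GC GPB A := mkGHom GPB_c1.
Definition Gq2 : @Hom GC GPB B := mkGHom GPB_c2.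
Lemma GPB_pb : @is_pullback GC A B Z GPB u v Gq1 Gq2.
Proof. apply G_lvl_pb; intro i; apply pbPi. Qed.

Lemma G_pb_lvl (Q : GO) (q1 : @Hom GC Q A) (q2 : @Hom GC Q B) :
  @is_pullback GC A B Z Q u v q1 q2 ->
  forall i, is_pullback (gmor u i) (gmor v i) (gmor q1 i) (gmor q2 i).
Proof.
  intros H i.
  destruct (pb_ex GPB_pb (proj1 H)) as [a [Ea1 Ea2]].
  destruct (pb_ex H (proj1 GPB_pb)) as [b [Eb1 Eb2]].
  assert (Eba : b ∘ a = @idm GC Q).
  { apply (pb_uniq G_cat H); rewrite (comp_assoc G_cat), ?Eb1, ?Eb2, ?Ea1, ?Ea2, ?Eb1, ?Eb2, (comp_id_r G_cat);
    reflexivity. }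
  assert (Eab : a ∘ b = @idm GC GPB).
  { apply (pb_uniq G_cat GPB_pb); rewrite (comp_assoc G_cat), ?Eb1, ?Eb2, ?Ea1, ?Ea2, ?Eb1, ?Eb2, (comp_id_r G_cat);
    reflexivity. }
  apply (pb_transfer (HC i) (pbPi i) (a:=gmor a i) (b:=gmor b i));
    [exact (geq i Eba) | exact (geq i Eab) | exact (geq i Ea1) | exact (geq i Ea2)].
Qed.
End PB.

Lemma G_products : has_finite_products GC.
Proof.
  split.
  - exists GT. apply GT_term.
  - intros A B. exists (GPr A B), (Gp1 A B), (Gp2 A B). apply GPr_prod.
Qed.

Lemma G_nat : PNatural GD.
Proof.
  constructor.
  - split; intros; apply gext; intro i; simpl.
    + apply (fmap_id (P_laws (HN i))).
    + apply (fmap_comp (P_laws (HN i))).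
  - intros; apply gext; intro i; simpl; apply (iota_nat (HN i)).
  - intros; apply gext; intro i; simpl; apply (delta_nat (HN i)).
  - intros; apply gext; intro i; simpl; apply (tau_nat (HN i)).
  - intros; apply gext; intro i; simpl; apply (cpath_nat (HN i)).
  - intros; apply gext; intro i; simpl; apply (mu_nat (HN i)).
  - intros; apply gext; intro i; simpl; apply (nabla_nat (HN i)).
Qed.

Lemma G_IsPCat : IsPCat GD.
Proof.
  constructor.
  - exact G_cat.
  - exact G_products.
  - exact G_nat.
  - intros; apply gext; intro i; simpl; apply (pc_delta_iota (HD i)).
  - intros; apply gext; intro i; simpl; apply (pc_tau_tau (HD i)).
  - intros; apply gext; intro i; simpl; apply (pc_tau_iota (HD i)).
  - intros; apply gext; intro i; simpl; apply (pc_delta_tau (HD i)).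
  - intros; apply gext; intro i; simpl; apply (pc_c_coassoc (HD i)).
  - intros; apply gext; intro i; simpl; apply (pc_c_delta1_l (HD i)).
  - intros; apply gext; intro i; simpl; apply (pc_c_delta1_r (HD i)).
  - intros; apply gext; intro i; simpl; apply (pc_c_iota (HD i)).
  - intros; apply gext; intro i; simpl; apply (pc_c_delta0_l (HD i)).
  - intros; apply gext; intro i; simpl; apply (pc_c_delta0_r (HD i)).
  - intro A.
    pose (g := fun i => pick (pc_mu_iso (HD i) (gob A i))).
    assert (E1 : forall i, g i ∘ gmor (mu GD A) i = idm _).
    { intro i. exact (proj1 (pick_spec (pc_mu_iso (HD i) (gob A i)))). }
    assert (E2 : forall i, gmor (mu GD A) i ∘ g i = idm _).
    { intro i. exact (proj2 (pick_spec (pc_mu_iso (HD i) (gob A i)))). }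
    exists (mkGHom (inv_comm _ _ (mu GD A) g E1 E2)).
    split; apply gext; intro i; simpl; [apply E1 | apply E2].
  - intros; apply gext; intro i; simpl; apply (pc_mu_l (HD i)).
  - intros; apply gext; intro i; simpl; apply (pc_mu_r (HD i)).
  - intros; apply gext; intro i; simpl; apply (pc_nabla_delta (HD i)).
  - intros; apply gext; intro i; simpl; apply (pc_nabla_iota (HD i)).
  - intros A B f Hf i. apply (pc_fib_iso (HD i)). apply G_iso_lvl; exact Hf.
  - intros A B f Hf i. apply (pc_weq_iso (HD i)). apply G_iso_lvl; exact Hf.
  - intros A B X g f Hf Hg i. apply (pc_fib_comp (HD i)); [apply Hf | apply Hg].
  - intros A B X g f Hf Hg i. apply (pc_weq_comp (HD i)); [apply Hf | apply Hg].
  - intros A B X g f Hg Hgf i. eapply (pc_weq_2of3_l (HD i)); [apply Hg | apply Hgf].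
  - intros A B X g f Hf Hgf i. eapply (pc_weq_2of3_r (HD i)); [apply Hf | apply Hgf].
  - intros e He A f i. apply (pc_fib_terminal (HD i) (G_term_lvl e He i)).
  - intros A i. apply (pc_weq_iota (HD i)).
  - intros A X p1 p2 Hp h E1 E2 i.
    apply (pc_fib_delta01 (HD i) (G_prod_lvl _ _ _ _ _ Hp i)); [exact (geq i E1) | exact (geq i E2)].
  - intros k A; split; intro i; apply (pc_delta_trivfib (HD i)).
  - intros A B Z u v Hv. split.
    + exists (GPB A B Z u v Hv), (Gq1 A B Z u v Hv), (Gq2 A B Z u v Hv). apply GPB_pb.
    + intros Q q1 q2 H. pose proof (G_pb_lvl A B Z u v Hv Q q1 q2 H) as L.
      split; [|split].
      * intro i. exact (proj1 (proj2 (pc_pullback (HD i) (gmor u i) (Hv i)) _ _ _ (L i))).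
      * intros Hw i. exact (proj1 (proj2 (proj2 (pc_pullback (HD i) (gmor u i) (Hv i)) _ _ _ (L i))) (Hw i)).
      * intros Hw i. exact (proj2 (proj2 (proj2 (pc_pullback (HD i) (gmor u i) (Hv i)) _ _ _ (L i))) (Hw i)).
  - intros A B f Hf i. apply (pc_P_fib (HD i)). apply Hf.
  - intros A B f Hf i. apply (pc_P_weq (HD i)). apply Hf.
  - intros A B Z u v Hv Q q1 q2 H. apply G_lvl_pb; intro i. simpl.
    apply (pc_P_pullback (HD i) (Hv i)). apply (G_pb_lvl A B Z u v Hv Q q1 q2 H i).
  - intros A B v Hv AA a1 a2 HA BB b1 b2 HB w Ew1 Ew2 d Ed1 Ed2 Q q1 q2 HQ h Eh1 Eh2 k Ek1 Ek2 i.
    pose proof (G_prod_lvl _ _ _ _ _ HA i) as HAi.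
    pose proof (G_prod_lvl _ _ _ _ _ HB i) as HBi.
    assert (Hd : forall i, Fib (D i) (gmor d i)).
    { intro i'. apply (pc_fib_delta01 (HD i') (G_prod_lvl _ _ _ _ _ HB i'));
        [exact (geq i' Ed1) | exact (geq i' Ed2)]. }
    pose proof (G_pb_lvl _ _ _ w d Hd Q q1 q2 HQ i) as HQi.
    exact (pc_P5 (HD i) (Hv i) HAi HBi (geq i Ew1) (geq i Ew2) (geq i Ed1) (geq i Ed2) HQi
             (geq i Eh1) (geq i Eh2) (geq i Ek1) (geq i Ek2)).
Qed.

Lemma G_lvl_pullbacks : Gamma_levelwise_pullbacks HC HF HN HPP.
Proof.
  intros A B Z u v Hv.
  exists (GPB A B Z u v Hv), (Gq1 A B Z u v Hv), (Gq2 A B Z u v Hv). split.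
  - apply GPB_pb.
  - intro i. apply pbPi.
Qed.

End G.

Theorem proposition4p6
  (I : Cat) (HI : CatLaws I) (Ifin : finite_cat I)
  (deg : Ob I -> nat)
  (Hdeg01 : forall i : Ob I, deg i <= 1)
  (Hdeg : forall (i j : Ob I) (u : Hom i j), ~ is_id u -> deg i < deg j)
  (Cs : Ob I -> Cat) (Cm : forall i j : Ob I, Hom i j -> Functor (Cs i) (Cs j))
  (HCm : is_Cat_functor I Cs Cm)
  (D : forall i : Ob I, PData (Cs i))
  (HD : forall i : Ob I, IsPCat (D i))
  (eP : forall (i j : Ob I) (u : Hom i j) (A : Ob (Cs i)),
      fobj (Cm i j u) (PO (D i) A) = PO (D j) (fobj (Cm i j u) A))
  (HeP : forall (i j : Ob I) (u : Hom i j),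
      preserves_path (D i) (D j) (Cm i j u) (eP i j u))
  (Hfib : forall (i j : Ob I) (u : Hom i j) (A B : Ob (Cs i)) (f : Hom A B),
      Fib (D i) f -> Fib (D j) (fmap (Cm i j u) f))
  (Hweq : forall (i j : Ob I) (u : Hom i j) (A B : Ob (Cs i)) (f : Hom A B),
      Weq (D i) f -> Weq (D j) (fmap (Cm i j u) f))
  (Hpb : forall (i j : Ob I) (u : Hom i j), preserves_fib_pullbacks (D i) (Cm i j u)) :
  IsPCat (GammaPData (fun i => pc_cat (HD i)) (proj1 HCm)
            (fun i => pc_nat (HD i)) HeP)
  /\ Gamma_levelwise_pullbacks (fun i => pc_cat (HD i)) (proj1 HCm)
       (fun i => pc_nat (HD i)) HeP.
Proof.
  split.
  - exact (G_IsPCat I Cs Cm (fun i => pc_cat (HD i)) (proj1 HCm) D (fun i => pc_nat (HD i)) eP HeP HD).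
  - exact (G_lvl_pullbacks I Cs Cm (fun i => pc_cat (HD i)) (proj1 HCm) D (fun i => pc_nat (HD i)) eP HeP HD).
Qed.
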